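(* (a) Let $\Gamma$ be a triangulation of a connected closed surface $M$ with a fixed $z$-orientation $\tau$ such that every face of $\Gamma$ is of type I and every zigzag in $\tau$ is homogeneous. Let $\Gamma_{II}$ be the subgraph of $\Gamma$ formed by all vertices of type II and all edges of type II (directed as type II edges). Then $\Gamma_{II}$ is a closed $2$-cell embedding in $M$ of a connected simple Eulerian digraph (every vertex has in-degree equal to out-degree) in which the boundary of every face is a directed cycle, and $\Gamma=\mathrm{T}(\Gamma_{II})$. (b) Conversely, let $\Gamma'$ be a closed $2$-cell embedding in $M$ of a connected simple Eulerian digraph such that the boundary of every face is a directed cycle. Then the triangulation $\mathrm{T}(\Gamma')$ admits a unique $z$-orientation for which all faces are of type I, all zigzags are homogeneous, and $\Gamma'$ (with its directions) is exactly the subgraph of $\mathrm{T}(\Gamma')$ formed by all vertices and edges of type II (with their type II directions).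
   Context: Let $M$ be a connected closed $2$-dimensional surface (not necessarily orientable). A triangulation of $M$ is a $2$-cell embedding of a connected simple finite graph in $M$ such that every face is a triangle. A zigzag in a triangulation $\Gamma$ is a sequence of edges $(e_i)_{i\in\mathbb N}$ such that for every $i$: $e_i$ and $e_{i+1}$ are distinct edges of a common face; the face containing $e_i,e_{i+1}$ is different from the face containing $e_{i+1},e_{i+2}$; and $e_i$, $e_{i+2}$ have no common vertex. It is regarded as a cyclic sequence $e_1,\dots,e_n$ ($n$ the minimal period), and passes through each of its edges in a definite direction (from the vertex shared with the previous edge to the vertex shared with the next). The reversal $Z^{-1}$ of a zigzag is a zigzag, $Z\ne Z^{-1}$. If $\Gamma$ has exactly $k$ zigzags up to reversal, a $z$-orientation is a set $\tau$ of $k$ zigzags containing exactly one of $Z,Z^{-1}$ for each zigzag $Z$. For a $z$-orientation, each edge either occurs twice in one zigzag of $\tau$ or once in each of two distinct zigzags of $\tau$ (and in no others); it is of type I if these two passages are in opposite directions and of type II if in the same direction (type II edges are directed accordingly). A vertex is of type I if all edges containing it are of type I, otherwise of type II. A face is of type I if it contains exactly two edges of type I and one edge of type II. When all faces are of type I, a zigzag is homogeneous if it is a cyclic sequence $e_1,e_1',e_1'',e_2,e_2',e_2'',\dots,e_n,e_n',e_n''$ in which every $e_i$ is of type II and every $e_i',e_i''$ is of type I. A $2$-cell embedding is closed if every face is homeomorphic to a closed $2$-disc. For a closed $2$-cell embedding $\Gamma'$ of a connected simple finite graph in $M$, $\mathrm{T}(\Gamma')$ denotes the triangulation of $M$ obtained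 by choosing a point $v_F$ in the interior of every face $F$, adding all $v_F$ as vertices, and joining each $v_F$ by an edge (inside $F$) to every vertex of $F$. *)

(* Defs.v *)
(* Surfaces and 2-cell embeddings are encoded combinatorially
   by generalized maps (flag systems). *)
From HB Require Import structures.
From mathcomp Require Import all_boot.
Set Implicit Arguments. Unset Strict Implicit. Unset Printing Implicit Defensive.

(* A generalized map: a finite set of flags (vertex, edge, face) with the three
   flag-switching operators: a0 changes the vertex, a1 the edge, a2 the face. *)
Record gmap := GMap {
  dart :> finType;
  a0 : dart -> dart;
  a1 : dart -> dart;
  a2 : dart -> dart }.

Section GMapDefs.
Variable G : gmap.
Implicit Types x y z : G.

Definition rel2 (f g : G -> G) : rel G := fun x y => (y == f x) || (y == g x).
Definition vrel := rel2 (@a1 G) (@a2 G).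
Definition erel := rel2 (@a0 G) (@a2 G).
Definition frel := rel2 (@a0 G) (@a1 G).
Definition arel : rel G := fun x y => [|| y == a0 x, y == a1 x | y == a2 x].

Definition sameV x y := connect vrel x y.
Definition sameE x y := connect erel x y.
Definition sameF x y := connect frel x y.

Definition is_gmap : Prop :=
  involutive (@a0 G) /\ involutive (@a1 G) /\ involutive (@a2 G) /\
  (forall x, a0 x != x) /\ (forall x, a1 x != x) /\ (forall x, a2 x != x) /\
  (forall x, a0 (a2 x) = a2 (a0 x)) /\ (forall x, a0 (a2 x) != x).

Definition gconnected : Prop := forall x y, connect arel x y.

Definition simple_gmap : Prop :=
  (forall x, ~~ sameV x (a0 x)) /\
  (forall x y, sameV x y -> sameV (a0 x) (a0 y) -> sameE x y).

Definition face_flags x := [set y | sameF x y].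
Definition face_vertices x := [set root vrel y | y in face_flags x].
Definition face_edges x := [set root erel y | y in face_flags x].

(* every face is a triangle (its boundary walk has length 3) *)
Definition triangular_faces : Prop := forall x, #|face_flags x| = 6.

(* closed 2-cell embedding: every face boundary walk is a cycle
   (no repeated vertex, no repeated edge) *)
Definition closed_faces : Prop := forall x,
  (#|face_vertices x|).*2 = #|face_flags x| /\ (#|face_edges x|).*2 = #|face_flags x|.

Definition triangulation : Prop :=
  [/\ is_gmap, gconnected, simple_gmap & triangular_faces].

(* A directed zigzag (Petrie walk) is an orbit of rho; the flag x records
   that the zigzag passes the edge of x from the vertex of x to the vertex
   of a0 x.  The reversed zigzag of the orbit of x is the orbit of a1 x. *)
Definition rho x := a1 (a0 (a2 x)).

(* z-orientation: tau is a union of directed zigzags containing exactly one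
   of Z, Z^{-1} for each zigzag Z *)
Definition z_orientation (tau : {set G}) : Prop :=
  (forall x, (rho x \in tau) = (x \in tau)) /\
  (forall x, (a1 x \in tau) = (x \notin tau)).

Variable tau : {set G}.

(* the edge of x is passed twice in the same direction / in opposite directions *)
Definition typeII_edge x : bool :=
  [exists y, exists z, [&& y != z, y \in tau, z \in tau, sameE x y, sameE x z
                          & sameV y z]].
Definition typeI_edge x : bool :=
  [exists y, exists z, [&& y \in tau, z \in tau, sameE x y, sameE x z
                          & sameV y (a0 z)]].
(* x sits at the tail (start) of its edge, which is of type II *)
Definition typeII_tail x : bool :=
  typeII_edge x && [exists y, [&& y \in tau, sameE x y & sameV x y]].

Definition typeI_vertex x : bool := [forall y, sameV x y ==> typeI_edge y].
Definition typeII_vertex x : bool := ~~ typeI_vertex x.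

Definition typeI_face x : bool :=
  (#|[set root erel y | y in [pred y | sameF x y && typeI_edge y]]| == 2) &&
  (#|[set root erel y | y in [pred y | sameF x y && typeII_edge y]]| == 1).

Definition homogeneous x : Prop :=
  exists y, fconnect rho x y /\ forall k, typeII_edge (iter k rho y) = (3 %| k).

End GMapDefs.

Section Digraph.
Variables (G : gmap) (tl : pred G). (* tl x : x lies at the tail of its edge *)

Definition orientation : Prop :=
  forall x, tl (a2 x) = tl x /\ tl (a0 x) = ~~ tl x.

Definition eulerian : Prop := forall x,
  #|[set root (@erel G) y | y in [pred y | sameV x y && tl y]]| =
  #|[set root (@erel G) y | y in [pred y | sameV x y && ~~ tl y]]|.

(* at each corner of each face one edge enters and the other leaves,
   i.e. every face boundary (a cycle) is a directed cycle *)
Definition directed_faces : Prop := forall x, tl (a1 x) = ~~ tl x.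

Definition good_directed_embedding : Prop :=
  is_gmap G /\ gconnected G /\ simple_gmap G /\ closed_faces G /\
  orientation /\ eulerian /\ directed_faces.
End Digraph.

(* flags of T(G) are pairs (x,i): i = 0 : (v(x), e(x), triangle(x));
   i = 1 : (v(x), spoke v(x)v_F, triangle(x)); i = 2 : (v_F, spoke, triangle(x)),
   where triangle(x) is the triangle v(x) v(a0 x) v_F with F the face of x. *)
Section TConstr.
Variable G : gmap.
Definition Tdart : finType := (G * 'I_3)%type.
Definition i0 : 'I_3 := @Ordinal 3 0 isT.
Definition i1 : 'I_3 := @Ordinal 3 1 isT.
Definition i2 : 'I_3 := @Ordinal 3 2 isT.

Definition t0 (p : Tdart) : Tdart :=
  match nat_of_ord p.2 with 0 => (a0 p.1, i0) | 1 => (p.1, i2) | _ => (p.1, i1) end.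
Definition t1 (p : Tdart) : Tdart :=
  match nat_of_ord p.2 with 0 => (p.1, i1) | 1 => (p.1, i0) | _ => (a0 p.1, i2) end.
Definition t2 (p : Tdart) : Tdart :=
  match nat_of_ord p.2 with 0 => (a2 p.1, i0) | 1 => (a1 p.1, i1) | _ => (a1 p.1, i2) end.

Definition Tmap : gmap := GMap t0 t1 t2.
End TConstr.

Definition gmap_iso (H G : gmap) (phi : H -> G) : Prop :=
  [/\ bijective phi,
      (forall p, phi (a0 p) = a0 (phi p)),
      (forall p, phi (a1 p) = a1 (phi p)) &
      (forall p, phi (a2 p) = a2 (phi p))].

(* Main.v *)
Require Import Defs.
From HB Require Import structures.
From mathcomp Require Import all_boot.
From mathcomp Require Import zify.
Set Implicit Arguments. Unset Strict Implicit. Unset Printing Implicit Defensive.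

Lemma connect_lift (T U : finType) (e : rel T) (e' : rel U) (f : T -> U) :
  (forall a b, e a b -> connect e' (f a) (f b)) ->
  forall a b, connect e a b -> connect e' (f a) (f b).
Proof.
move=> H a b /connectP [p pth ->]; elim: p a pth => [|c p IH] a /=.
  by move=> _; exact: connect0.
by case/andP=> eac /IH; apply: connect_trans; exact: H.
Qed.

Lemma connect_inv (T : finType) (e : rel T) (P : pred T) x y :
  P x -> (forall a b, P a -> e a b -> P b) -> connect e x y -> P y.
Proof.
move=> Px H /connectP [p pth ->]; elim: p x Px pth => [|c p IH] x Px //=.
by case/andP=> exc; apply: IH; exact: H Px exc.
Qed.

Lemma half_card (T U : finType) (S : {set T}) (s : T -> T) (r : T -> U) :
  (forall y, y \in S -> s y \in S) -> (forall y, s y != y) ->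
  (forall y y', y \in S -> y' \in S -> (r y' == r y) = (y' == y) || (y' == s y)) ->
  #|S| = (#|r @: S|).*2.
Proof.
move=> sS sN rE.
rewrite -sum1_card (partition_big r (mem (r @: S))) /=; last first.
  by move=> y yS; apply: imset_f.
rewrite -muln2 -sum_nat_const; apply: eq_bigr => u /imsetP [y0 y0S ->].
rewrite sum1dep_card; transitivity #|[set y0; s y0]|; last first.
  by rewrite cards2 eq_sym sN.
apply: eq_card => y; rewrite !inE.
case yS: (y \in S) => /=; first by rewrite rE.
apply/esym/negbTE; apply/orP => -[] /eqP Ey; move: yS; rewrite Ey ?y0S ?sS //.
Qed.


Section Basic.
Variable G : gmap.
Hypothesis HG : is_gmap G.
Implicit Types x y z : G.

Lemma a0K : involutive (@a0 G). Proof. by case: HG. Qed.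
Lemma a1K : involutive (@a1 G). Proof. by case: HG => _ []. Qed.
Lemma a2K : involutive (@a2 G). Proof. by case: HG => _ [] _ []. Qed.
Lemma a0_neq x : a0 x != x. Proof. by case: HG => _ [] _ [] _ []. Qed.
Lemma a1_neq x : a1 x != x. Proof. by case: HG => _ [] _ [] _ [] _ []. Qed.
Lemma a2_neq x : a2 x != x. Proof. by case: HG => _ [] _ [] _ [] _ [] _ []. Qed.
Lemma a02C x : a0 (a2 x) = a2 (a0 x). Proof. by case: HG => _ [] _ [] _ [] _ [] _ [] _ []. Qed.
Lemma a02_neq x : a0 (a2 x) != x. Proof. by case: HG => _ [] _ [] _ [] _ [] _ [] _ []. Qed.
Lemma a0_inj : injective (@a0 G). Proof. exact: inv_inj a0K. Qed.
Lemma a1_inj : injective (@a1 G). Proof. exact: inv_inj a1K. Qed.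
Lemma a2_inj : injective (@a2 G). Proof. exact: inv_inj a2K. Qed.
Lemma a020 x : a0 (a2 (a0 x)) = a2 x. Proof. by rewrite a02C a0K. Qed.
Lemma a202 x : a2 (a0 (a2 x)) = a0 x. Proof. by rewrite -a02C a2K. Qed.

Lemma rel2_sym (f g : G -> G) : involutive f -> involutive g -> connect_sym (rel2 f g).
Proof.
move=> fK gK; apply: sym_connect_sym => x y; rewrite /rel2.
by apply/orP/orP => -[] /eqP ->; rewrite ?fK ?gK eqxx; auto.
Qed.

Lemma symV : connect_sym (@vrel G). Proof. exact: rel2_sym a1K a2K. Qed.
Lemma symE : connect_sym (@erel G). Proof. exact: rel2_sym a0K a2K. Qed.
Lemma symF : connect_sym (@Defs.frel G). Proof. exact: rel2_sym a0K a1K. Qed.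
Lemma symA : connect_sym (@arel G).
Proof.
apply: sym_connect_sym => x y; rewrite /arel.
by apply/idP/idP => /or3P [] /eqP ->; rewrite ?a0K ?a1K ?a2K eqxx ?orbT.
Qed.

Lemma sameV1 x : sameV x (a1 x). Proof. by apply: connect1; rewrite /vrel/rel2 eqxx. Qed.
Lemma sameV2 x : sameV x (a2 x). Proof. by apply: connect1; rewrite /vrel/rel2 eqxx orbT. Qed.
Lemma sameE0 x : sameE x (a0 x). Proof. by apply: connect1; rewrite /erel/rel2 eqxx. Qed.
Lemma sameE2 x : sameE x (a2 x). Proof. by apply: connect1; rewrite /erel/rel2 eqxx orbT. Qed.
Lemma sameF0 x : sameF x (a0 x). Proof. by apply: connect1; rewrite /Defs.frel/rel2 eqxx. Qed.
Lemma sameF1 x : sameF x (a1 x). Proof. by apply: connect1; rewrite /Defs.frel/rel2 eqxx orbT. Qed.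
Lemma sameV_sym x y : sameV x y = sameV y x. Proof. exact: symV. Qed.
Lemma sameE_sym x y : sameE x y = sameE y x. Proof. exact: symE. Qed.
Lemma sameF_sym x y : sameF x y = sameF y x. Proof. exact: symF. Qed.
Lemma sameV_trans x y z : sameV x y -> sameV y z -> sameV x z. Proof. exact: connect_trans. Qed.
Lemma sameE_trans x y z : sameE x y -> sameE y z -> sameE x z. Proof. exact: connect_trans. Qed.
Lemma sameF_trans x y z : sameF x y -> sameF y z -> sameF x z. Proof. exact: connect_trans. Qed.

Lemma sameE_cases x y : sameE x y -> y \in [:: x; a0 x; a2 x; a0 (a2 x)].
Proof.
apply: (@connect_inv _ _ (fun y => y \in [:: x; a0 x; a2 x; a0 (a2 x)])).
  by rewrite inE eqxx.
move=> a b; rewrite /erel/rel2 !inE => Ha /orP [] /eqP ->;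
by case/or4P: Ha => /eqP ->; rewrite ?a0K ?a2K ?a02C ?a202 ?a020 ?a0K ?a2K eqxx ?orbT.
Qed.

Lemma sameE02 x : sameE x (a0 (a2 x)).
Proof. exact: sameE_trans (sameE2 x) (sameE0 _). Qed.
Lemma sameV20 x : sameV (a0 x) (a0 (a2 x)).
Proof. by rewrite a02C; exact: sameV2. Qed.

End Basic.


Section Tau.
Variable G : gmap.
Hypothesis HG : is_gmap G.
Variable tau : {set G}.
Hypothesis Hz : z_orientation tau.
Hypothesis NL : forall x : G, ~~ sameV x (a0 x).
Implicit Types x y z : G.

Lemma tau_rho x : (rho x \in tau) = (x \in tau). Proof. by case: Hz. Qed.
Lemma tau_a1 x : (a1 x \in tau) = (x \notin tau). Proof. by case: Hz. Qed.
Lemma tau_a02 x : (a0 (a2 x) \in tau) = (x \notin tau).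
Proof.
rewrite -tau_a1.
have -> : a1 x = rho (a2 (a0 x)) by rewrite /rho a2K // a0K.
by rewrite tau_rho a02C.
Qed.
Lemma tau_a0 x : (a0 x \in tau) = (a2 x \notin tau).
Proof. by rewrite -tau_a02 a2K. Qed.

Lemma NL' x : ~~ sameV (a0 x) x. Proof. by rewrite sameV_sym. Qed.
Lemma NL2 x : ~~ sameV (a2 x) (a0 (a2 x)). Proof. exact: NL. Qed.

Lemma typeII_edgeE x : typeII_edge tau x = ((x \in tau) == (a2 x \in tau)).
Proof.
apply/idP/idP.
- case/existsP=> y /existsP [z /andP [yz /and5P [ty tz xy xz Vyz]]].
  move: (sameE_cases HG xy) (sameE_cases HG xz); rewrite !inE.
  case/or4P=> /eqP Ey; case/or4P => /eqP Ez; subst y z;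
    rewrite ?eqxx // in yz; move: ty tz; rewrite ?tau_a02 ?tau_a0;
    case: (x \in tau); case: (a2 x \in tau) => //= _ _;
    rewrite ?(negbTE (NL _)) ?(negbTE (NL' _)) ?(negbTE (NL2 _)) // in Vyz;
    move: Vyz; rewrite sameV_sym ?(negbTE (NL2 _)) //.
- move=> /eqP E; apply/existsP; case tx: (x \in tau).
  + exists x; apply/existsP; exists (a2 x).
    rewrite eq_sym a2_neq // tx -E tx /= sameE2 // sameV2 // andbT.
    by rewrite andbT; exact: connect0.
  + exists (a0 x); apply/existsP; exists (a0 (a2 x)).
    rewrite (inj_eq (a0_inj HG)) eq_sym a2_neq // tau_a0 // -E tx tau_a02 // tx.
    by rewrite sameE0 // sameE02 // sameV20.
Qed.

Lemma NLb x : ~~ sameV x (a0 (a2 x)).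
Proof.
apply/negP => H; move/negP: (NL x); apply; apply: sameV_trans H _.
by rewrite sameV_sym //; exact: (sameV20 HG).
Qed.
Lemma NLc x : ~~ sameV (a2 x) (a0 x).
Proof. by move: (NLb (a2 x)); rewrite a2K. Qed.
Lemma NLa' x : ~~ sameV (a0 x) x. Proof. by rewrite sameV_sym //; exact: NL. Qed.
Lemma NLb' x : ~~ sameV (a0 (a2 x)) x. Proof. by rewrite sameV_sym //; exact: NLb. Qed.
Lemma NLc' x : ~~ sameV (a0 x) (a2 x). Proof. by rewrite sameV_sym //; exact: NLc. Qed.
Lemma NLd' x : ~~ sameV (a0 (a2 x)) (a2 x). Proof. by rewrite sameV_sym //; exact: NL. Qed.

Ltac nlk := rewrite ?(negbTE (NL _)) ?(negbTE (NLb _)) ?(negbTE (NLc _)) ?(negbTE (NL2 _))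
  ?(negbTE (NLa' _)) ?(negbTE (NLb' _)) ?(negbTE (NLc' _)) ?(negbTE (NLd' _)).

Lemma typeI_edgeE x : typeI_edge tau x = ~~ typeII_edge tau x.
Proof.
rewrite typeII_edgeE; apply/idP/idP.
- case/existsP=> y /existsP [z /and5P [ty tz xy xz Vyz]].
  move: (sameE_cases HG xy) (sameE_cases HG xz); rewrite !inE.
  case/or4P=> /eqP Ey; case/or4P => /eqP Ez; subst y z;
    move: ty tz Vyz; rewrite ?a0K // ?tau_a02 ?tau_a0;
    case: (x \in tau); case: (a2 x \in tau) => //= _ _; nlk => //.
- move=> E; have t2 : (a2 x \in tau) = ~~ (x \in tau).
    by move: E; case: (x \in tau); case: (a2 x \in tau).
  apply/existsP; case tx: (x \in tau).
  + exists x; apply/existsP; exists (a0 x).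
    rewrite tx tau_a0 t2 tx a0K // sameE0 //=; apply/andP; split; exact: connect0.
  + exists (a2 x); apply/existsP; exists (a0 (a2 x)).
    rewrite tau_a02 tx t2 tx a0K // sameE2 // sameE02 //=; exact: connect0.
Qed.

Lemma typeII_a0 x : typeII_edge tau (a0 x) = typeII_edge tau x.
Proof. rewrite !typeII_edgeE tau_a0 -a02C // tau_a02; by case: (x \in tau); case: (a2 x \in tau). Qed.
Lemma typeII_a2 x : typeII_edge tau (a2 x) = typeII_edge tau x.
Proof. by rewrite !typeII_edgeE a2K // eq_sym. Qed.
Lemma typeII_sameE x y : sameE x y -> typeII_edge tau y = typeII_edge tau x.
Proof.
move/(sameE_cases HG); rewrite !inE => /or4P [] /eqP ->;
by rewrite ?typeII_a0 ?typeII_a2.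
Qed.

Lemma typeII_tailE x : typeII_tail tau x = typeII_edge tau x && (x \in tau).
Proof.
rewrite /typeII_tail; case t2: (typeII_edge tau x) => //=.
case tx: (x \in tau).
  by apply/existsP; exists x; rewrite tx /=; apply/andP; split; exact: connect0.
apply/negbTE/existsP => -[y /and3P [ty xy Vxy]].
move: t2; rewrite typeII_edgeE tx eq_sym => /eqP t2.
move: (sameE_cases HG xy); rewrite !inE => /or4P [] /eqP Ey; subst y.
- by rewrite tx in ty.
- by rewrite (negbTE (NL _)) in Vxy.
- by rewrite t2 in ty.
- by rewrite (negbTE (NLb _)) in Vxy.
Qed.

Lemma typeII_vertexE x :
  typeII_vertex tau x = [exists y, sameV x y && typeII_edge tau y].
Proof.
rewrite /typeII_vertex /typeI_vertex negb_forall; apply: eq_existsb => y.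
by rewrite typeI_edgeE negb_imply negbK.
Qed.

End Tau.


Section Face.
Variable G : gmap.
Hypothesis HG : is_gmap G.
Implicit Types x y z u : G.

Definition hh (y : G) := a1 (a0 y).
Lemma hh_inj : injective hh.
Proof. by move=> a b /(a1_inj HG) /(a0_inj HG). Qed.

Lemma noref_aux d : (forall a y, a0 (iter a hh y) != iter (a + d) hh y) /\
                    (forall a y, a0 (iter a hh y) != iter (a + d.+1) hh y).
Proof.
elim: d => [|d [IH1 IH2]].
  split=> a y; first by rewrite addn0 a0_neq.
  by rewrite addn1 iterS /hh eq_sym a1_neq.
split=> // a y; apply/eqP; rewrite -addSnnS addnS iterS /hh => /(congr1 (@a1 G)).
rewrite a1K // => E; move/eqP: (IH1 a.+1 y); apply.
by rewrite iterS /hh E a0K // addSn.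
Qed.

Lemma noref a d y : a0 (iter a hh y) != iter (a + d) hh y.
Proof. by case: (noref_aux d). Qed.

Lemma fcon_step w : fconnect hh (a0 (hh w)) (a0 w).
Proof. by apply: connect1; rewrite /= /hh a0K // a1K // a0K. Qed.

Lemma fcon_a0r u z : fconnect hh u z -> fconnect hh (a0 z) (a0 u).
Proof.
move=> /iter_findex <-; elim: (findex hh u z) => [|n IH] /=; first exact: connect0.
exact: connect_trans (fcon_step _) IH.
Qed.

Lemma fcon_a0 u z : fconnect hh u z -> fconnect hh (a0 u) (a0 z).
Proof. by move/fcon_a0r; rewrite fconnect_sym //; exact: hh_inj. Qed.

Lemma fcon_a1 u z : fconnect hh u z -> fconnect hh (a0 u) (a1 z).
Proof.
move/fcon_a0 => H; apply: connect_trans H _.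
have -> : a1 z = hh (a0 z) by rewrite /hh a0K.
exact: fconnect1.
Qed.

Lemma sameF_hh x y : sameF x y = fconnect hh x y || fconnect hh (a0 x) y.
Proof.
apply/idP/idP.
- apply: (@connect_inv _ _ (fun y => fconnect hh x y || fconnect hh (a0 x) y)).
    by rewrite connect0.
  move=> a b Ha; rewrite /Defs.frel /rel2 => /orP [] /eqP ->.
  + case/orP: Ha => /fcon_a0; first by move->; rewrite orbT.
    by rewrite a0K // => ->.
  + case/orP: Ha => /fcon_a1; first by move->; rewrite orbT.
    by rewrite a0K // => ->.
- have sub : subrel (frel hh) (connect (@Defs.frel G)).
    move=> a b /= /eqP <-; apply: sameF_trans (sameF0 a) (sameF1 _).
  case/orP => /(connect_sub sub) //.
  exact: sameF_trans (sameF0 x).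
Qed.

Lemma order_face x : #|face_flags x| = (order hh x).*2.
Proof.
pose A := [set y | fconnect hh x y]; pose B := [set y | fconnect hh (a0 x) y].
have -> : face_flags x = A :|: B.
  by apply/setP => y; rewrite !inE sameF_hh.
have AB : A :&: B = set0.
  apply/setP => y; rewrite !inE; apply/negbTE/andP => -[xy ay].
  move: (noref 0 (findex hh x (a0 x)) x); rewrite /= add0n iter_findex ?eqxx //.
  by apply: connect_trans xy _; rewrite fconnect_sym //; exact: hh_inj.
have BA : B = (@a0 G) @: A.
  apply/setP => y; rewrite !inE; apply/idP/imsetP.
  - move/fcon_a0; rewrite a0K // => H; exists (a0 y); first by rewrite inE.
    by rewrite a0K.
  - by case=> z; rewrite inE => /fcon_a0 H ->.
rewrite cardsU AB cards0 subn0 BA card_imset; last exact: a0_inj.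
by rewrite addnn /order; congr (_.*2); apply: eq_card => y; rewrite inE.
Qed.

Lemma hh3 x : #|face_flags x| = 6 -> iter 3 hh x = x.
Proof.
rewrite order_face => H; have : order hh x = 3 by lia.
move=> <-; apply: iter_order; exact: hh_inj.
Qed.

Lemma TR_of x : #|face_flags (a0 x)| = 6 -> a1 (a0 (a1 x)) = a0 (a1 (a0 x)).
Proof.
move/hh3; rewrite /= /hh a0K // => /(congr1 (@a1 G)); rewrite a1K // => /(congr1 (@a0 G)).
by rewrite a0K.
Qed.

End Face.

Section Face6.
Variable G : gmap.
Hypothesis HG : is_gmap G.
Hypothesis TR : forall x : G, a1 (a0 (a1 x)) = a0 (a1 (a0 x)).
Implicit Types x y z u : G.

Definition W6 x := [:: x; a0 x; a1 x; a0 (a1 x); a1 (a0 x); a0 (a1 (a0 x))].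

Lemma face6 x y : sameF x y -> y \in W6 x.
Proof.
apply: (@connect_inv _ _ (fun y => y \in W6 x)); first by rewrite inE eqxx.
move=> a b; rewrite /Defs.frel /rel2 /W6 !inE => Ha /orP [] /eqP ->;
repeat case/orP: Ha => [/eqP ->|Ha]; try (move/eqP: Ha => ->);
rewrite ?(a0K HG) ?(a1K HG) ?TR ?(a0K HG) ?(a1K HG) ?eqxx ?orbT //.
Qed.

Lemma W6_face x y : y \in W6 x -> sameF x y.
Proof.
have F0 := @sameF0 G; have F1 := @sameF1 G; have T := @sameF_trans G.
rewrite /W6 !inE => H.
repeat case/orP: H => [/eqP ->|H]; try (move/eqP: H => ->).
- exact: connect0.
- exact: F0.
- exact: F1.
- exact: T (F1 _) (F0 _).
- exact: T (F0 _) (F1 _).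
- exact: T _ _ _ (T _ _ _ (F0 x) (F1 (a0 x))) (F0 _).
Qed.

End Face6.


Lemma ord3P (i : 'I_3) : [\/ i = i0, i = i1 | i = i2].
Proof.
case: i => [[|[|[|n]]] Hi] //; [constructor 1|constructor 2|constructor 3]; exact: val_inj.
Qed.

Section TGmap.
Variable H : gmap.
Hypothesis HH : is_gmap H.
Notation T := (Tmap H).

Lemma t00 x : a0 ((x, i0) : T) = (a0 x, i0). Proof. by []. Qed.
Lemma t01 x : a0 ((x, i1) : T) = (x, i2). Proof. by []. Qed.
Lemma t02 x : a0 ((x, i2) : T) = (x, i1). Proof. by []. Qed.
Lemma t10 x : a1 ((x, i0) : T) = (x, i1). Proof. by []. Qed.
Lemma t11 x : a1 ((x, i1) : T) = (x, i0). Proof. by []. Qed.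
Lemma t12 x : a1 ((x, i2) : T) = (a0 x, i2). Proof. by []. Qed.
Lemma t20 x : a2 ((x, i0) : T) = (a2 x, i0). Proof. by []. Qed.
Lemma t21 x : a2 ((x, i1) : T) = (a1 x, i1). Proof. by []. Qed.
Lemma t22 x : a2 ((x, i2) : T) = (a1 x, i2). Proof. by []. Qed.
Definition tE := (t00, t01, t02, t10, t11, t12, t20, t21, t22).
Lemma i01 : (i0 == i1) = false. Proof. by []. Qed.
Lemma i02 : (i0 == i2) = false. Proof. by []. Qed.
Lemma i12 : (i1 == i2) = false. Proof. by []. Qed.
Lemma i10 : (i1 == i0) = false. Proof. by []. Qed.
Lemma i20 : (i2 == i0) = false. Proof. by []. Qed.
Lemma i21 : (i2 == i1) = false. Proof. by []. Qed.
Definition iE := (i01, i02, i12, i10, i20, i21).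

Lemma Tis_gmap : is_gmap T.
Proof.
have K0 := a0K HH; have K1 := a1K HH; have K2 := a2K HH.
split; [|split; [|split; [|split; [|split; [|split; [|split]]]]]];
  case=> x i; case: (ord3P i) => ->; rewrite !tE ?K0 ?K1 ?K2 //;
  rewrite ?xpair_eqE ?iE ?eqxx ?andbF ?andbT //=;
  try by [exact: (a0_neq HH) | exact: (a1_neq HH) | exact: (a2_neq HH) | rewrite a02C |
           exact: (a02_neq HH)].
Qed.

Lemma TTR (p : T) : a1 (a0 (a1 p)) = a0 (a1 (a0 p)).
Proof. by case: p => x i; case: (ord3P i) => ->; rewrite !tE. Qed.

Lemma rhoT0 x : rho ((x, i0) : T) = (a0 (a2 x), i1). Proof. by []. Qed.
Lemma rhoT1 x : rho ((x, i1) : T) = (a0 (a1 x), i2). Proof. by []. Qed.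
Lemma rhoT2 x : rho ((x, i2) : T) = (a1 x, i0). Proof. by []. Qed.

Lemma rhoT_idx (p : T) : nat_of_ord (rho p).2 = (p.2 + 1) %% 3.
Proof. by case: p => x i; case: (ord3P i) => ->. Qed.

Definition vtag (p : T) : bool * H :=
  if nat_of_ord p.2 == 2 then (true, root (@Defs.frel H) p.1) else (false, root (@vrel H) p.1).
Definition etag (p : T) : bool * H :=
  if nat_of_ord p.2 == 0 then (true, root (@erel H) p.1) else (false, root (@vrel H) p.1).

Lemma vtag_sameV (p q : T) : sameV p q -> vtag q = vtag p.
Proof.
move=> pq; apply/eqP; move: pq; apply: (@connect_inv _ _ (fun q => vtag q == vtag p)) => //.
move=> a b /eqP <-; rewrite /vrel/rel2 => /orP [] /eqP ->; apply/eqP;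
case: a => x i; case: (ord3P i) => ->; rewrite !tE /vtag //=; congr pair;
first [apply/(rootP (symF HH)); rewrite -/(sameF _ _) sameF_sym //; first [exact: sameF0 | exact: sameF1]
      | apply/(rootP (symV HH)); rewrite -/(sameV _ _) sameV_sym //; first [exact: sameV1 | exact: sameV2]].
Qed.

Lemma etag_sameE (p q : T) : sameE p q -> etag q = etag p.
Proof.
move=> pq; apply/eqP; move: pq; apply: (@connect_inv _ _ (fun q => etag q == etag p)) => //.
move=> a b /eqP <-; rewrite /erel/rel2 => /orP [] /eqP ->; apply/eqP;
case: a => x i; case: (ord3P i) => ->; rewrite !tE /etag //=; congr pair;
first [apply/(rootP (symE HH)); rewrite -/(sameE _ _) sameE_sym //; first [exact: sameE0 | exact: sameE2]
      | apply/(rootP (symV HH)); rewrite -/(sameV _ _) sameV_sym //; first [exact: sameV1 | exact: sameV2]].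
Qed.

End TGmap.


Lemma typeI_face_sameF (G : gmap) (tau : {set G}) (HG : is_gmap G) (p q : G) :
  sameF p q -> typeI_face tau q = typeI_face tau p.
Proof.
move=> pq; have E : sameF p =1 sameF q by apply: same_connect => //; exact: symF.
rewrite /typeI_face.
have K : forall (P : pred G), [set root (@erel G) y | y in [pred y | sameF q y && P y]] =
                       [set root (@erel G) y | y in [pred y | sameF p y && P y]].
  move=> P; apply/setP => u; apply/imsetP/imsetP => -[y] Hy ->; exists y => //;
  move: Hy; rewrite !inE E //.
by rewrite !K.
Qed.

Section PartB.
Variable H : gmap.
Variable tl : pred H.
Hypothesis Hgood : good_directed_embedding tl.
Notation T := (Tmap H).
Implicit Types x : H.

Lemma HH : is_gmap H. Proof. by case: Hgood. Qed.
Lemma NLH x : ~~ sameV x (a0 x). Proof. by case: Hgood => _ [_ [[Hs _] _]]. Qed.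
Lemma tl2 x : tl (a2 x) = tl x. Proof. by case: Hgood => _ [_ [_ [_ [Ho _]]]]; case: (Ho x). Qed.
Lemma tl0 x : tl (a0 x) = ~~ tl x. Proof. by case: Hgood => _ [_ [_ [_ [Ho _]]]]; case: (Ho x). Qed.
Lemma tl1 x : tl (a1 x) = ~~ tl x. Proof. by case: Hgood => _ [_ [_ [_ [_ [_ Hd]]]]]. Qed.
Lemma TG : is_gmap T. Proof. exact: Tis_gmap HH. Qed.

Lemma NLT (p : T) : ~~ sameV p (a0 p).
Proof.
apply/negP => /vtag_sameV; case: p => x i; case: (ord3P i) => ->; rewrite !tE /vtag //=.
all: move/(_ HH) => //; case=> /esym /(rootP (symV HH)); exact/negP/NLH.
Qed.

Definition tauB : {set T} := [set p : T | if nat_of_ord p.2 == 0 then tl p.1 else ~~ tl p.1].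

Lemma inB0 x : (((x, i0) : T) \in tauB) = tl x. Proof. by rewrite inE. Qed.
Lemma inB1 x : (((x, i1) : T) \in tauB) = ~~ tl x. Proof. by rewrite inE. Qed.
Lemma inB2 x : (((x, i2) : T) \in tauB) = ~~ tl x. Proof. by rewrite inE. Qed.
Definition inBE := (inB0, inB1, inB2).

Lemma zB : z_orientation tauB.
Proof.
split=> p; case: p => x i; case: (ord3P i) => ->;
rewrite /rho !tE !inBE ?tl0 ?tl1 ?tl2 ?negbK //.
Qed.

Lemma typeII_B (p : T) : typeII_edge tauB p = (nat_of_ord p.2 == 0).
Proof.
rewrite (typeII_edgeE TG zB NLT); case: p => x i; case: (ord3P i) => ->;
rewrite !tE !inBE ?tl0 ?tl1 ?tl2; by case: (tl x).
Qed.


Lemma idxB k (q : T) : nat_of_ord (iter k (@rho T) q).2 = (q.2 + k) %% 3.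
Proof.
elim: k q => [|k IH] q /=; first by rewrite addn0 modn_small.
by rewrite rhoT_idx IH modnDml -addnA addn1.
Qed.

Lemma homB p : homogeneous tauB p.
Proof.
pose y := iter ((3 - p.2) %% 3) (@rho T) p.
have y2 : nat_of_ord y.2 = 0.
  rewrite idxB; have := ltn_ord p.2; case: (nat_of_ord p.2) => [|[|[|n]]] //.
exists y; split; first exact: fconnect_iter.
by move=> k; rewrite typeII_B idxB y2 add0n.
Qed.

Lemma vertB p : typeII_vertex tauB p = (nat_of_ord p.2 != 2).
Proof.
rewrite (typeII_vertexE TG zB NLT).
case: p => x i; case: (ord3P i) => -> /=.
- apply/existsP; exists (x,i0); rewrite typeII_B andbT; exact: connect0.
- apply/existsP; exists (x,i0); rewrite typeII_B andbT; apply: connect1.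
  by rewrite /vrel/rel2 t11 eqxx.
- apply/negbTE/existsP => -[y /andP [/vtag_sameV E]]; rewrite typeII_B; move: E.
  case: y => z j; case: (ord3P j) => -> //= /(_ HH).
  by rewrite /vtag /=.
Qed.

Lemma tailB x : typeII_tail tauB ((x, i0) : T) = tl x.
Proof. by rewrite (typeII_tailE TG zB NLT) typeII_B inB0. Qed.

Lemma faceB p : typeI_face tauB p.
Proof.
have TR := @TTR H.
case: p => x i.
have -> : typeI_face tauB (x, i) = typeI_face tauB ((x, i0) : T).
  apply: (typeI_face_sameF _ TG); case: (ord3P i) => ->; first exact: connect0.
    by rewrite -t10; exact: sameF1.
  by rewrite -t01 -t10; apply: sameF_trans (sameF1 _) (sameF0 _).
have EI : [set root (@erel T) y | y in [pred y | sameF ((x, i0) : T) y && typeI_edge tauB y]] =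
          [set root (@erel T) ((x, i1) : T); root (@erel T) ((a0 x, i1) : T)].
  apply/setP=> u; apply/imsetP/set2P.
  - case=> y; rewrite inE => /andP [/(face6 TG TR)].
    rewrite (typeI_edgeE TG zB NLT) typeII_B /W6 !tE !inE => Hy nz ->.
    repeat case/orP: Hy => [/eqP Ey|Hy]; try (move/eqP: Hy => Ey); subst y => //; auto;
    [left|right]; apply/(rootP (symE TG)); exact: sameE0.
  - case=> ->; [exists ((x, i1) : T) | exists ((a0 x, i1) : T)] => //;
    rewrite inE (typeI_edgeE TG zB NLT) typeII_B andbT; apply: W6_face;
    by rewrite /W6 !tE !inE eqxx ?orbT.
have EII : [set root (@erel T) y | y in [pred y | sameF ((x, i0) : T) y && typeII_edge tauB y]] =
          [set root (@erel T) ((x, i0) : T)].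
  apply/setP=> u; apply/imsetP/set1P.
  - case=> y; rewrite inE => /andP [/(face6 TG TR)].
    rewrite typeII_B /W6 !tE !inE => Hy nz ->.
    repeat case/orP: Hy => [/eqP Ey|Hy]; try (move/eqP: Hy => Ey); subst y => //.
    apply/(rootP (symE TG)); rewrite -/(sameE _ _) sameE_sym //; [exact: sameE0 | exact: TG].
  - move=> ->; exists ((x, i0) : T) => //.
    by rewrite inE typeII_B andbT; exact: connect0.
rewrite /typeI_face EI EII cards1 cards2 eqxx andbT eqSS eqb1.
apply/negP => /eqP /(rootP (symE TG)).
move/etag_sameE; rewrite /etag /= => /(_ HH) [] /esym /(rootP (symV HH)).
by apply/negP; exact: NLH.
Qed.

Lemma uniqB (tau : {set T}) : z_orientation tau ->
  (forall p, typeII_edge tau p = (nat_of_ord p.2 == 0)) ->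
  (forall x, typeII_tail tau ((x, i0) : T) = tl x) -> tauB = tau.
Proof.
move=> Hz He Ht.
have t0 : forall x, (((x, i0) : T) \in tau) = tl x.
  by move=> x; rewrite -Ht (typeII_tailE TG Hz NLT) He.
apply/setP => p; case: p => x i; case: (ord3P i) => ->; rewrite inBE.
- by rewrite t0.
- by rewrite -t10 (tau_a1 Hz) t0.
- have -> : ((x, i2) : T) = rho ((a1 (a0 x), i1) : T) by rewrite rhoT1 (a1K HH) (a0K HH).
  by rewrite (tau_rho Hz) -t10 (tau_a1 Hz) t0 tl1 tl0 negbK.
Qed.

End PartB.

Lemma partB (H : gmap) (tl : pred H) : good_directed_embedding tl ->
     exists! tau : {set Tmap H},
       z_orientation tau /\
       (forall p : Tmap H, typeI_face tau p) /\
       (forall p : Tmap H, p \in tau -> homogeneous tau p) /\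
       (forall p : Tmap H, typeII_vertex tau p = (nat_of_ord p.2 != 2)) /\
       (forall p : Tmap H, typeII_edge tau p = (nat_of_ord p.2 == 0)) /\
       (forall x : H, typeII_tail tau ((x, i0) : Tmap H) = tl x).
Proof.
move=> Hg; exists (tauB tl); split.
  split; first exact: zB.
  split; first exact: faceB.
  split; first by move=> p _; exact: homB.
  split; first exact: vertB.
  split; first exact: typeII_B.
  exact: tailB.
by move=> tau [Hz [_ [_ [_ [He Ht]]]]]; apply: uniqB.
Qed.



Section PartA.
Variable G : gmap.
Variable tau : {set G}.
Hypothesis Htri : triangulation G.
Hypothesis Hz : z_orientation tau.
Hypothesis Hface : forall x : G, typeI_face tau x.
Hypothesis Hhom : forall x : G, x \in tau -> homogeneous tau x.
Implicit Types x y z w q : G.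

Lemma HG : is_gmap G. Proof. by case: Htri. Qed.
Lemma Hsimp : simple_gmap G. Proof. by case: Htri. Qed.
Lemma NLG x : ~~ sameV x (a0 x). Proof. by case: Hsimp => /(_ x). Qed.
Lemma simpl2 x y : sameV x y -> sameV (a0 x) (a0 y) -> sameE x y.
Proof. by case: Hsimp => _; apply. Qed.
Lemma TRG x : a1 (a0 (a1 x)) = a0 (a1 (a0 x)).
Proof. by case: Htri => _ _ _ H6; exact: (TR_of HG (H6 (a0 x))). Qed.

Notation tII := (typeII_edge tau).
Lemma IIE x : tII x = ((x \in tau) == (a2 x \in tau)). Proof. exact: (typeII_edgeE HG Hz NLG x). Qed.
Lemma IIa0 x : tII (a0 x) = tII x. Proof. exact: (typeII_a0 HG Hz NLG x). Qed.
Lemma IIa2 x : tII (a2 x) = tII x. Proof. exact: (typeII_a2 HG Hz NLG x). Qed.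
Lemma IIsE x y : sameE x y -> tII y = tII x. Proof. exact: (typeII_sameE HG Hz NLG). Qed.
Lemma IE x : typeI_edge tau x = ~~ tII x. Proof. exact: (typeI_edgeE HG Hz NLG x). Qed.
Lemma II20 x : tII (a2 (a0 x)) = tII x. Proof. by rewrite IIa2 IIa0. Qed.

Lemma sameE_root x y : sameE x y -> root (@erel G) x = root (@erel G) y.
Proof. by move/(rootP (symE HG)). Qed.

Lemma FI x : tII x -> ~~ tII (a1 x) /\ ~~ tII (a1 (a0 x)).
Proof.
move=> Hx; move: (Hface x); rewrite /typeI_face => /andP [/eqP HI _].
set IS := [set _ | _ in _] in HI.
pose ra := root (@erel G) (a1 x); pose rb := root (@erel G) (a1 (a0 x)).
have sub : IS \subset [set ra; rb].
  apply/subsetP => u /imsetP [y]; rewrite inE => /andP [/(face6 HG TRG) Hy].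
  rewrite IE => nII ->; rewrite !inE.
  move: Hy; rewrite /W6 !inE => Hy.
  repeat case/orP: Hy => [/eqP Ey|Hy]; try (move/eqP: Hy => Ey); subst y.
  - by rewrite Hx in nII.
  - by rewrite IIa0 Hx in nII.
  - by rewrite /ra eqxx.
  - by rewrite /ra -(sameE_root (sameE0 _)) eqxx.
  - by rewrite /rb eqxx orbT.
  - by rewrite /rb -(sameE_root (sameE0 _)) eqxx orbT.
have E : IS = [set ra; rb].
  apply/eqP; rewrite eqEcard sub cards2 HI; by case: (ra != rb).
have get : forall w, root (@erel G) w \in IS -> ~~ tII w.
  move=> w /imsetP [y]; rewrite inE => /andP [_]; rewrite IE => Hy.
  move/esym/(rootP (symE HG)) => /IIsE ->; exact: Hy.
by split; apply: get; rewrite E !inE eqxx ?orbT.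
Qed.

Lemma FII x : [|| tII x, tII (a1 x) | tII (a1 (a0 x))].
Proof.
move: (Hface x); rewrite /typeI_face => /andP [_ /eqP HII].
set IS := [set _ | _ in _] in HII.
have : IS != set0 by rewrite -card_gt0 HII.
case/set0Pn => u /imsetP [y]; rewrite inE => /andP [/(face6 HG TRG) Hy Iy] _.
move: Hy; rewrite /W6 !inE => Hy.
repeat case/orP: Hy => [/eqP Ey|Hy]; try (move/eqP: Hy => Ey); subst y;
  rewrite ?IIa0 in Iy; by rewrite Iy ?orbT.
Qed.

Lemma rho_inj : injective (@rho G).
Proof. by move=> a b /(a1_inj HG) /(a0_inj HG) /(a2_inj HG). Qed.

Lemma iter_period q a : iter (a * order (@rho G) q) (@rho G) q = q.
Proof.
elim: a => [|a IH] //; rewrite mulSn iterD IH; apply: iter_order; exact: rho_inj.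
Qed.

Lemma Pat q : q \in tau -> exists m, forall k, tII (iter k (@rho G) q) = (3 %| (k + m)).
Proof.
move/Hhom => [y [qy Hy]].
pose n := order (@rho G) q; pose j := findex (@rho G) q y.
have jn : j < n by apply: findex_max.
exists (3 * n - j) => k.
have -> : iter k (@rho G) q = iter (k + 3 * n - j) (@rho G) y.
  rewrite -(iter_findex qy) -/j -iterD subnK; last by lia.
  by rewrite iterD /n iter_period.
by rewrite Hy addnBA //; lia.
Qed.

Lemma P1 q : q \in tau -> ~~ tII q -> ~~ tII (rho q) -> tII (rho (rho q)).
Proof.
move/Pat => [m Hm]; move: (Hm 0) (Hm 1) (Hm 2) => /= -> -> ->.
rewrite add0n; lia.
Qed.

Lemma P2 q : q \in tau -> ~~ tII (rho q) -> ~~ tII (rho (rho q)) -> tII q.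
Proof.
move/Pat => [m Hm]; move: (Hm 0) (Hm 1) (Hm 2) => /= -> -> ->.
rewrite add0n; lia.
Qed.

Lemma rho_pre w : rho (a2 (a0 (a1 w))) = w.
Proof. by rewrite /rho (a2K HG) (a0K HG) (a1K HG). Qed.

Lemma tau_pre w : (a2 (a0 (a1 w)) \in tau) = (w \in tau).
Proof. by rewrite -{2}(rho_pre w) (tau_rho Hz). Qed.

Lemma Kkey x : tII x -> tII (a1 (a2 (a1 x))).
Proof.
move=> Hx; case: (FI Hx) => I1 I10.
pose y := a0 (a1 x).
have Iy : ~~ tII y by rewrite /y IIa0.
have Ia1y : ~~ tII (a1 y) by rewrite /y TRG IIa0.
case ty: (y \in tau).
- pose q := a2 (a0 (a1 y)).
  have rq : rho q = y by exact: rho_pre.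
  have tq : q \in tau by rewrite /q tau_pre.
  have Iq : ~~ tII q by rewrite /q II20.
  have := P1 tq Iq; rewrite rq => /(_ Iy).
  by rewrite /rho /y (a020 HG).
- pose q := a1 y.
  have tq : q \in tau by rewrite /q (tau_a1 Hz) ty.
  pose p := a2 (a0 (a1 q)).
  have rp : rho p = q by exact: rho_pre.
  have tp : p \in tau by rewrite /p tau_pre.
  pose p' := a2 (a0 (a1 p)).
  have rp' : rho p' = p by exact: rho_pre.
  have tp' : p' \in tau by rewrite /p' tau_pre.
  have := P2 tp'; rewrite rp' rp => /(_ _ Ia1y).
  rewrite /p /q (a1K HG) II20 => /(_ Iy).
  by rewrite /p' II20 /p /q (a1K HG) /y (a0K HG).
Qed.

Definition CC z := tII (a1 (a0 z)).

Lemma CC_a1 z : CC (a1 z) = CC z.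
Proof. by rewrite /CC TRG IIa0. Qed.

Lemma CC_a2 z : CC z -> CC (a2 z).
Proof.
rewrite /CC => /Kkey; congr (tII (a1 _)).
by rewrite (a1K HG) (a02C HG).
Qed.

Lemma CC_sameV z z' : CC z -> sameV z z' -> CC z'.
Proof.
move=> Cz; apply: (@connect_inv _ _ CC) => // a b Ca.
by rewrite /vrel/rel2 => /orP [] /eqP ->; [rewrite CC_a1 | apply: CC_a2].
Qed.

Lemma CC_I z : CC z -> ~~ tII z.
Proof.
rewrite /CC => /FI [I1 _]; by move: I1; rewrite (a1K HG) IIa0.
Qed.

Lemma CC_II x : tII x -> CC (a0 (a1 x)).
Proof. by rewrite /CC (a0K HG) (a1K HG). Qed.

Lemma CC_vert z : CC z -> typeII_vertex tau z = false.
Proof.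
move=> Cz; rewrite (typeII_vertexE HG Hz NLG); apply/negbTE/existsP => -[y /andP [zy]].
by move: (CC_I (CC_sameV Cz zy)) => /negbTE ->.
Qed.

Lemma Wlem y : tII y -> ~~ sameV (a0 (a1 y)) (a0 (a1 (a2 y))).
Proof.
move=> Hy; apply/negP => S.
have V1 : sameV (a1 y) (a1 (a2 y)).
  apply: (@sameV_trans _ _ y); first by rewrite (sameV_sym HG) sameV1.
  exact: sameV_trans (sameV2 y) (sameV1 _).
have yV : sameV y (a1 (a2 y)) by apply: sameV_trans (sameV2 y) (sameV1 _).
have C0 := CC_II Hy.
move: (sameE_cases HG (simpl2 V1 S)); rewrite !inE => /or4P [] /eqP E.
- by move: (a2_neq HG y); rewrite (a1_inj HG E) eqxx.
- have : CC y by apply: CC_sameV C0 _; rewrite (sameV_sym HG) -E.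
  by move/CC_I; rewrite Hy.
- have E' : a1 (a2 (a1 y)) = a2 y by rewrite -E (a1K HG).
  have I1 : ~~ tII (a1 y) by case: (FI Hy).
  move: Hy; rewrite IIE => /eqP t2.
  have : (a1 (a2 (a1 y)) \in tau) = (a2 y \in tau) by rewrite E'.
  rewrite (tau_a1 Hz) -t2; move: I1.
  rewrite IIE (tau_a1 Hz); case: (y \in tau); case: (a2 (a1 y) \in tau) => //.
- have : CC y.
    apply: CC_sameV C0 _; rewrite (sameV_sym HG); apply: sameV_trans yV _.
    rewrite E (a02C HG) (sameV_sym HG); exact: sameV2.
  by move/CC_I; rewrite Hy.
Qed.

Lemma Vcl y y' : tII y -> tII y' -> sameV y y' -> sameV (a0 (a1 y)) (a0 (a1 y')) ->
  y' = y \/ y' = a1 (a2 (a1 y)).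
Proof.
move=> Hy Hy' V S.
have V1 : sameV (a1 y) (a1 y').
  apply: (@sameV_trans _ _ y); first by rewrite (sameV_sym HG) sameV1.
  exact: sameV_trans V (sameV1 _).
have C0 := CC_II Hy.
have y'V : sameV y' (a1 y') by exact: sameV1.
move: (sameE_cases HG (simpl2 V1 S)); rewrite !inE => /or4P [] /eqP E.
- by left; apply: (a1_inj HG).
- have : CC y' by apply: CC_sameV C0 _; rewrite -E (sameV_sym HG); exact: sameV1.
  by move/CC_I; rewrite Hy'.
- by right; rewrite -E (a1K HG).
- have : CC y'.
    apply: CC_sameV C0 _; rewrite (sameV_sym HG); apply: sameV_trans y'V _.
    rewrite E (a02C HG) (sameV_sym HG); exact: sameV2.
  by move/CC_I; rewrite Hy'.
Qed.


Definition D : finType := {x : G | tII x}.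
Definition dv (x : D) : G := val x.
Lemma dv_inj : injective dv. Proof. exact: val_inj. Qed.
Lemma dvP (x : D) : tII (dv x). Proof. exact: valP x. Qed.
Lemma IIa0' (x : D) : tII (a0 (dv x)). Proof. by rewrite IIa0 dvP. Qed.
Lemma IIa2' (x : D) : tII (a2 (dv x)). Proof. by rewrite IIa2 dvP. Qed.
Lemma IIa1' (x : D) : tII (a1 (a2 (a1 (dv x)))). Proof. exact: Kkey (dvP x). Qed.
Definition da0 (x : D) : D := exist _ (a0 (dv x)) (IIa0' x).
Definition da1 (x : D) : D := exist _ (a1 (a2 (a1 (dv x)))) (IIa1' x).
Definition da2 (x : D) : D := exist _ (a2 (dv x)) (IIa2' x).
Definition G' : gmap := @GMap D da0 da1 da2.

Lemma dv0 (x : G') : dv (a0 x) = a0 (dv x). Proof. by []. Qed.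
Lemma dv1 (x : G') : dv (a1 x) = a1 (a2 (a1 (dv x))). Proof. by []. Qed.
Lemma dv2 (x : G') : dv (a2 x) = a2 (dv x). Proof. by []. Qed.
Definition dvE := (dv0, dv1, dv2).
Lemma dv_inj' : injective (dv : G' -> G). Proof. exact: dv_inj. Qed.

Lemma G'gmap : is_gmap G'.
Proof.
have K0 := a0K HG; have K1 := a1K HG; have K2 := a2K HG.
split; [|split; [|split; [|split; [|split; [|split; [|split]]]]]].
- by move=> x; apply: dv_inj'; rewrite !dvE K0.
- by move=> x; apply: dv_inj'; rewrite !dvE K1 K2 K1.
- by move=> x; apply: dv_inj'; rewrite !dvE K2.
- move=> x; apply/eqP => /(congr1 dv); rewrite dvE; apply/eqP; exact: a0_neq HG _.
- move=> x; apply/eqP => /(congr1 dv); rewrite dvE => /(congr1 (@a1 G)); rewrite (a1K HG) => E.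
  by move: (a2_neq HG (a1 (dv x))); rewrite E eqxx.
- move=> x; apply/eqP => /(congr1 dv); rewrite dvE; apply/eqP; exact: a2_neq HG _.
- by move=> x; apply: dv_inj'; rewrite !dvE (a02C HG).
- move=> x; apply/eqP => /(congr1 dv); rewrite !dvE; apply/eqP; exact: a02_neq HG _.
Qed.

Lemma sameV_dv (x y : G') : sameV x y -> sameV (dv x) (dv y).
Proof.
apply: connect_lift => a b; rewrite /vrel/rel2 => /orP [] /eqP ->; rewrite dvE.
- apply: sameV_trans (sameV1 _) _; apply: sameV_trans (sameV2 _) (sameV1 _).
- exact: sameV2.
Qed.

Lemma sameE_dv (x y : G') : sameE x y -> sameE (dv x) (dv y).
Proof.
apply: connect_lift => a b; rewrite /erel/rel2 => /orP [] /eqP ->; rewrite dvE.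
- exact: sameE0.
- exact: sameE2.
Qed.

Lemma FV (u v : G') : sameF u v -> sameV (a0 (a1 (dv u))) (a0 (a1 (dv v))).
Proof.
apply: (connect_lift (f := fun w : G' => a0 (a1 (dv w)))) => a b.
rewrite /Defs.frel/rel2 => /orP [] /eqP ->; rewrite dvE.
- rewrite -TRG; exact: sameV1.
- rewrite (a1K HG) (a02C HG); exact: sameV2.
Qed.

Lemma G'simple : simple_gmap G'.
Proof.
split.
- move=> x; apply/negP => /sameV_dv; rewrite dvE; apply/negP; exact: NLG.
- move=> x y /sameV_dv V /sameV_dv; rewrite !dvE => V0.
  move: (sameE_cases HG (simpl2 V V0)); rewrite !inE => /or4P [] /eqP E.
  + by rewrite (dv_inj' E); exact: connect0.
  + have -> : y = a0 x by apply: dv_inj'.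
    exact: sameE0.
  + have -> : y = a2 x by apply: dv_inj'.
    exact: sameE2.
  + have -> : y = a0 (a2 x) by apply: dv_inj'.
    exact: sameE02.
Qed.

Lemma G'closed : closed_faces G'.
Proof.
have HG' := G'gmap.
move=> x; split; symmetry; apply: half_card.
- by move=> y; rewrite !inE => H; apply: sameF_trans H (sameF1 _).
- exact: a1_neq HG'.
- move=> y y'; rewrite !inE => Fy Fy'; apply/idP/idP.
  + move/eqP/esym/(rootP (symV HG')) => V.
    have V2 : sameV (a0 (a1 (dv y))) (a0 (a1 (dv y'))).
      apply: sameV_trans (FV Fy'); rewrite (sameV_sym HG); exact: FV Fy.
    case: (Vcl (dvP y) (dvP y') (sameV_dv V) V2) => E.
      by rewrite (dv_inj' E) eqxx.
    have -> : y' = a1 y by apply: dv_inj'.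
    by rewrite eqxx orbT.
  + case/orP => /eqP ->; apply/eqP/(rootP (symV HG')); first exact: connect0.
    by apply: connect1; rewrite /vrel/rel2 (a1K HG') eqxx.
- by move=> y; rewrite !inE => H; apply: sameF_trans H (sameF0 _).
- exact: a0_neq HG'.
- move=> y y'; rewrite !inE => Fy Fy'; apply/idP/idP.
  + move/eqP/esym/(rootP (symE HG')) => /sameE_dv E.
    have Fyy' : sameF y y' by apply: sameF_trans Fy'; rewrite (sameF_sym HG').
    move: (sameE_cases HG E); rewrite !inE => /or4P [] /eqP E'.
    * by rewrite (dv_inj' E') eqxx.
    * have -> : y' = a0 y by apply: dv_inj'.
      by rewrite eqxx orbT.
    * move: (FV Fyy'); rewrite E'; move/negP: (Wlem (dvP y)); by move=> H /H.
    * have Fy0 : sameF (a0 y) y' by apply: sameF_trans Fyy'; rewrite (sameF_sym HG'); exact: sameF0.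
      move: (FV Fy0); rewrite E' dvE (a02C HG); move/negP: (Wlem (dvP (a0 y))); rewrite dvE.
      by move=> H /H.
  + case/orP => /eqP ->; apply/eqP/(rootP (symE HG')); first exact: connect0.
    by apply: connect1; rewrite /erel/rel2 (a0K HG') eqxx.
Qed.

Definition tl' : pred G' := fun u : G' => dv u \in tau.

Lemma tl'2 (x : G') : tl' (a2 x) = tl' x.
Proof. by rewrite /tl' dv2; move: (dvP x); rewrite IIE => /eqP ->. Qed.
Lemma tl'0 (x : G') : tl' (a0 x) = ~~ tl' x.
Proof. by rewrite /tl' dv0 (tau_a0 HG Hz) -dv2 -/(tl' (a2 x)) tl'2. Qed.
Lemma tl'1 (x : G') : tl' (a1 x) = ~~ tl' x.
Proof.
rewrite /tl' dv1 (tau_a1 Hz).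
case: (FI (dvP x)) => I1 _; move: I1; rewrite IIE (tau_a1 Hz).
by case: (dv x \in tau); case: (a2 (a1 (dv x)) \in tau).
Qed.

Lemma imset_predE (T U : finType) (f : T -> U) (P : pred T) :
  [set f y | y in [pred y | P y]] = f @: [set y | P y].
Proof. by apply/setP => u; apply/imsetP/imsetP => -[y Hy ->]; exists y; rewrite // inE in Hy *. Qed.

Lemma G'euler : eulerian tl'.
Proof.
have HG' := G'gmap.
move=> x; rewrite /eulerian.
have EE : forall (P Q : pred G'), P =1 Q ->
    [set root (@erel G') y | y in [pred y | P y]] = root (@erel G') @: [set y : G' | Q y].
  move=> P Q PQ; apply/setP => u; apply/imsetP/imsetP => -[y Hy ->]; exists y => //;
  move: Hy; rewrite !inE PQ //.
rewrite (EE (fun y : G' => sameV x y && tl' y) (fun y : G' => sameV x y && (tl' y == true))); last first.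
  by move=> y; rewrite eqb_id.
rewrite (EE (fun y : G' => sameV x y && ~~ tl' y) (fun y : G' => sameV x y && (tl' y == false))); last first.
  by move=> y; rewrite eqbF_neg.
have hA : forall b : bool, #|[set y : G' | sameV x y && (tl' y == b)]| =
    (#|root (@erel G') @: [set y : G' | sameV x y && (tl' y == b)]|).*2.
  move=> b; apply: (half_card (s := @a2 G')).
  - move=> y; rewrite !inE tl'2 => /andP [V ->]; rewrite andbT.
    apply: sameV_trans V (sameV2 _).
  - exact: a2_neq HG'.
  - move=> y y'; rewrite !inE => /andP [_ /eqP ty] /andP [_ /eqP ty']; apply/idP/idP.
    + move/eqP/esym/(rootP (symE HG')) => /sameE_dv E.
      move: (sameE_cases HG E); rewrite !inE => /or4P [] /eqP E'.
      * by rewrite (dv_inj' E') eqxx.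
      * have E2 : y' = a0 y by apply: dv_inj'.
        by move: ty'; rewrite E2 tl'0 ty; case: b {ty}.
      * have -> : y' = a2 y by apply: dv_inj'.
        by rewrite eqxx orbT.
      * have E2 : y' = a0 (a2 y) by apply: dv_inj'.
        by move: ty'; rewrite E2 tl'0 tl'2 ty; case: b {ty}.
    + case/orP => /eqP ->; apply/eqP/(rootP (symE HG')); first exact: connect0.
      by apply: connect1; rewrite /erel/rel2 (a2K HG') eqxx orbT.
apply: double_inj; rewrite -!hA.
have -> : [set y : G' | sameV x y && (tl' y == false)] = (@a1 G') @: [set y : G' | sameV x y && (tl' y == true)].
  apply/setP => y; apply/idP/imsetP.
  - rewrite inE => /andP [V t]; exists (a1 y); last by rewrite (a1K HG').
    rewrite inE tl'1 (eqP t) eqxx andbT; apply: sameV_trans V (sameV1 _).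
  - case=> z; rewrite !inE => /andP [V t] ->; rewrite tl'1 (eqP t) eqxx andbT.
    apply: sameV_trans V (sameV1 _).
by rewrite card_imset //; exact: a1_inj HG'.
Qed.

Definition phi (p : Tmap G') : G :=
  match nat_of_ord p.2 with 0 => dv p.1 | 1 => a1 (dv p.1) | _ => a0 (a1 (dv p.1)) end.
Lemma phi0 (x : G') : phi ((x, i0) : Tmap G') = dv x. Proof. by []. Qed.
Lemma phi1 (x : G') : phi ((x, i1) : Tmap G') = a1 (dv x). Proof. by []. Qed.
Lemma phi2 (x : G') : phi ((x, i2) : Tmap G') = a0 (a1 (dv x)). Proof. by []. Qed.
Definition phiE := (phi0, phi1, phi2).

Lemma phi_a0 (p : Tmap G') : phi (a0 p) = a0 (phi p).
Proof.
case: p => x i; case: (ord3P i) => ->; rewrite ?t00 ?t01 ?t02 !phiE ?dv0 ?(a0K HG) //.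
Qed.
Lemma phi_a1 (p : Tmap G') : phi (a1 p) = a1 (phi p).
Proof.
case: p => x i; case: (ord3P i) => ->; rewrite ?t10 ?t11 ?t12 !phiE ?dv0 ?(a1K HG) //.
by rewrite TRG.
Qed.
Lemma phi_a2 (p : Tmap G') : phi (a2 p) = a2 (phi p).
Proof.
case: p => x i; case: (ord3P i) => ->; rewrite ?t20 ?t21 ?t22 !phiE ?dv1 ?dv2 ?(a1K HG) //.
by rewrite (a02C HG).
Qed.

Lemma phi_inj : injective phi.
Proof.
have c12 : forall x y : G', a1 (dv x) <> a0 (a1 (dv y)).
  move=> x y E; move: (CC_II (dvP y)); rewrite -E CC_a1 => /CC_I; by rewrite dvP.
have c01 : forall x y : G', dv x <> a1 (dv y).
  move=> x y E; move: (dvP x); rewrite E; case: (FI (dvP y)) => /negbTE -> //.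
have c02 : forall x y : G', dv x <> a0 (a1 (dv y)).
  move=> x y E; move: (dvP x); rewrite E IIa0; case: (FI (dvP y)) => /negbTE -> //.
case=> x i [y j]; case: (ord3P i) => ->; case: (ord3P j) => ->; rewrite !phiE => E.
- by rewrite (dv_inj' E).
- by case: (c01 _ _ E).
- by case: (c02 _ _ E).
- by case: (c01 _ _ (esym E)).
- by rewrite (dv_inj' (a1_inj HG E)).
- by case: (c12 _ _ E).
- by case: (c02 _ _ (esym E)).
- by case: (c12 _ _ (esym E)).
- by rewrite (dv_inj' (a1_inj HG (a0_inj HG E))).
Qed.

Lemma phi_surj z : exists p, phi p = z.
Proof.
case t0: (tII z).
  by exists ((exist _ z t0 : D) : G', i0).
case t1: (tII (a1 z)).
  by exists ((exist _ (a1 z) t1 : D) : G', i1); rewrite phi1 /= (a1K HG).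
have t2 : tII (a1 (a0 z)) by move: (FII z); rewrite t0 t1.
by exists ((exist _ (a1 (a0 z)) t2 : D) : G', i2); rewrite phi2 /= (a1K HG) (a0K HG).
Qed.

Lemma phi_bij : bijective phi.
Proof.
apply: inj_card_bij phi_inj _.
rewrite -(card_codom phi_inj); apply: subset_leq_card; apply/subsetP => z _.
by case: (phi_surj z) => p <-; exact: codom_f.
Qed.

Lemma Tstep (p : Tmap G') (q : Tmap G') : arel p q -> connect (@arel G') p.1 q.1.
Proof.
rewrite /arel => /or3P [] /eqP ->; case: p => x i; case: (ord3P i) => ->;
  rewrite ?tE /=; try exact: connect0; apply: connect1; by rewrite /arel eqxx ?orbT.
Qed.

Lemma G'conn : gconnected G'.
Proof.
case: phi_bij => g phig gphi.
have lift : forall a b : G, connect (@arel G) a b -> connect (@arel G') (g a).1 (g b).1.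
  apply: (connect_lift (f := fun z => (g z).1)) => a b ab; apply: Tstep.
  move: ab; rewrite -{1}(gphi a) /arel -phi_a0 -phi_a1 -phi_a2.
  by case/or3P => /eqP ->; rewrite phig eqxx ?orbT.
move=> x y; case: Htri => _ Hc _ _.
move: (lift _ _ (Hc (phi ((x, i0) : Tmap G')) (phi ((y, i0) : Tmap G')))).
by rewrite !phig.
Qed.

Lemma partA_sec : exists (G'' : gmap) (tl : pred G'') (ph : Tmap G'' -> G),
       good_directed_embedding tl /\
       gmap_iso ph /\
       (forall p : Tmap G'', typeII_vertex tau (ph p) = (nat_of_ord p.2 != 2)) /\
       (forall p : Tmap G'', typeII_edge tau (ph p) = (nat_of_ord p.2 == 0)) /\
       (forall x : G'', typeII_tail tau (ph ((x, i0) : Tmap G'')) = tl x).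
Proof.
exists G', tl', phi; split.
  split; first exact: G'gmap.
  split; first exact: G'conn.
  split; first exact: G'simple.
  split; first exact: G'closed.
  split; first by move=> x; rewrite tl'2 tl'0.
  split; first exact: G'euler.
  exact: tl'1.
split; first by split; [exact: phi_bij | exact: phi_a0 | exact: phi_a1 | exact: phi_a2].
split.
  case=> x i; case: (ord3P i) => ->; rewrite !phiE /=.
  - rewrite (typeII_vertexE HG Hz NLG); apply/existsP; exists (dv x).
    by rewrite dvP andbT; exact: connect0.
  - rewrite (typeII_vertexE HG Hz NLG); apply/existsP; exists (dv x).
    by rewrite dvP andbT (sameV_sym HG); exact: sameV1.
  - exact: CC_vert (CC_II (dvP x)).
split.
  case=> x i; case: (ord3P i) => ->; rewrite !phiE /= ?dvP //;
  rewrite ?IIa0; by case: (FI (dvP x)) => /negbTE ->.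
by move=> x; rewrite phi0 (typeII_tailE HG Hz NLG) dvP.
Qed.

End PartA.


Theorem theorem1 :
  (* (a) *)
  (forall (G : gmap) (tau : {set G}),
     triangulation G -> z_orientation tau ->
     (forall x : G, typeI_face tau x) ->
     (forall x : G, x \in tau -> homogeneous tau x) ->
     exists (G' : gmap) (tl : pred G') (phi : Tmap G' -> G),
       good_directed_embedding tl /\
       gmap_iso phi /\
       (forall p : Tmap G', typeII_vertex tau (phi p) = (nat_of_ord p.2 != 2)) /\
       (forall p : Tmap G', typeII_edge tau (phi p) = (nat_of_ord p.2 == 0)) /\
       (forall x : G', typeII_tail tau (phi ((x, i0) : Tmap G')) = tl x))
  /\
  (* (b) *)
  (forall (G' : gmap) (tl : pred G'),
     good_directed_embedding tl ->
     exists! tau : {set Tmap G'},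
       z_orientation tau /\
       (forall p : Tmap G', typeI_face tau p) /\
       (forall p : Tmap G', p \in tau -> homogeneous tau p) /\
       (forall p : Tmap G', typeII_vertex tau p = (nat_of_ord p.2 != 2)) /\
       (forall p : Tmap G', typeII_edge tau p = (nat_of_ord p.2 == 0)) /\
       (forall x : G', typeII_tail tau ((x, i0) : Tmap G') = tl x)).
Proof.
split.
- move=> G tau Ht Hz Hf Hh; exact: (partA_sec Ht Hz Hf Hh).
- move=> G' tl Hg; exact: (partB Hg).
Qed.
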